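(* Let $\varphi_0,\varphi_1\in\mathrm{Mon}_+$ and let $d$ be the distance defined by $d(\varphi_0,\varphi_1)^2=\min\mathcal{L}(v)$, the minimum being over all $v\in L^2([0,1],H^1_0([0,1]))$ admitting a Lagrangian flow $\varphi$ with $\varphi(0,\cdot)=\varphi_0$, $\varphi(1,\cdot)=\varphi_1$, where $\mathcal{L}(v)=\int_0^1\int_0^1 v^2+\tfrac14(\partial_x v)^2\,dx\,dt$. Then $$\sup_{x\in[0,1]}|\varphi_0(x)-\varphi_1(x)|\le 2\,d(\varphi_0,\varphi_1),$$ where the supremum is a pointwise supremum (not an essential supremum).
   Context: $\mathrm{Mon}_+$ denotes the set of nondecreasing functions $f:[0,1]\to[0,1]$ with $f(0)=0$ and $f(1)=1$. Definition (Lagrangian flow): let $v\in L^1([0,1],C([0,1]))$. A map $\varphi:[0,1]\times[0,1]\to[0,1]$, $(t,x)\mapsto\varphi(t,x)$, is a Lagrangian flow associated with $v$ if (i) $x\mapsto\varphi(t,x)$ is nondecreasing for every $t$, and (ii) for every $x$ the map $t\mapsto\varphi(t,x)$ is absolutely continuous and $\varphi(t,x)-\varphi(s,x)=\int_s^t v(r,\varphi(r,x))\,dr$ for all $0\le s<t\le 1$. *)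

(* Defs.v *)
From HB Require Import structures.
From mathcomp Require Import all_boot all_order all_algebra.
From mathcomp Require Import all_classical all_reals all_analysis.
Set Implicit Arguments. Unset Strict Implicit. Unset Printing Implicit Defensive.
Import Order.TTheory GRing.Theory Num.Theory.
Import numFieldNormedType.Exports.
Local Open Scope classical_set_scope.
Local Open Scope ring_scope.

Section Defs.
Variable R : realType.
Local Notation mu := (@lebesgue_measure R).

Definition Monp (f : R -> R) : Prop :=
  (forall x, x \in `[0%R, 1%R] -> f x \in `[0%R, 1%R]) /\
  (forall x y, x \in `[0%R, 1%R] -> y \in `[0%R, 1%R] -> x <= y -> f x <= f y) /\
  f 0 = 0 /\ f 1 = 1.

Definition abs_cont (a b : R) (f : R -> R) : Prop :=
  forall e : R, 0 < e -> exists2 d : R, 0 < d &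
    forall (n : nat) (u v : nat -> R),
      (forall i, (i < n)%N -> a <= u i /\ u i <= v i /\ v i <= b) ->
      (forall i, (i.+1 < n)%N -> v i <= u i.+1) ->
      \sum_(i < n) (v i - u i) < d ->
      \sum_(i < n) `|f (v i) - f (u i)| < e.

Definition lagrangian_flow (v : R -> R -> R) (phi : R -> R -> R) : Prop :=
  (forall t x, t \in `[0%R, 1%R] -> x \in `[0%R, 1%R] -> phi t x \in `[0%R, 1%R]) /\
  (forall t x y, t \in `[0%R, 1%R] -> x \in `[0%R, 1%R] -> y \in `[0%R, 1%R] -> x <= y ->
     phi t x <= phi t y) /\
  (forall x, x \in `[0%R, 1%R] ->
     abs_cont 0 1 (fun t => phi t x) /\
     mu.-integrable `[0%R, 1%R] (fun r => (v r (phi r x))%:E) /\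
     (forall s t, 0 <= s -> s < t -> t <= 1 ->
        ((phi t x - phi s x)%:E =
         \int[mu]_(r in `[s, t]) (v r (phi r x))%:E)%E)).

(* v in L^2([0,1], H^1_0([0,1])) with weak x-derivative w:
   v(t,x) = int_0^x w(t,y) dy, v(t,1) = 0, w(t,.) in L^2, jointly measurable,
   and finite L^2(H^1) norm. *)
Definition L2H10_with_deriv (v w : R -> R -> R) : Prop :=
  measurable_fun (((`[0%R, 1%R] : set R) `*` (`[0%R, 1%R] : set R)) : set (R * R)) (fun p : R * R => v p.1 p.2) /\
  measurable_fun (((`[0%R, 1%R] : set R) `*` (`[0%R, 1%R] : set R)) : set (R * R)) (fun p : R * R => w p.1 p.2) /\
  (forall t, t \in `[0%R, 1%R] ->
     mu.-integrable `[0%R, 1%R] (fun y => (w t y)%:E) /\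
     (\int[mu]_(y in `[0%R, 1%R]) ((w t y) ^+ 2)%:E < +oo)%E /\
     (forall x, x \in `[0%R, 1%R] ->
        ((v t x)%:E = \int[mu]_(y in `[0%R, x]) (w t y)%:E)%E) /\
     v t 1 = 0) /\
  (\int[mu]_(t in `[0%R, 1%R]) \int[mu]_(x in `[0%R, 1%R])
      ((v t x) ^+ 2 + (w t x) ^+ 2)%:E < +oo)%E.

Definition energy (v w : R -> R -> R) : \bar R :=
  (\int[mu]_(t in `[0%R, 1%R]) \int[mu]_(x in `[0%R, 1%R])
      ((v t x) ^+ 2 + (w t x) ^+ 2 / 4)%:E)%E.


Definition dist2 (phi0 phi1 : R -> R) : \bar R :=
  ereal_inf [set energy vw.1 vw.2 | vw in
    [set vw : (R -> R -> R) * (R -> R -> R) |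
       L2H10_with_deriv vw.1 vw.2 /\
       exists phi, lagrangian_flow vw.1 phi /\
         (forall x, x \in `[0%R, 1%R] -> phi 0 x = phi0 x) /\
         (forall x, x \in `[0%R, 1%R] -> phi 1 x = phi1 x)]].

Definition dist (phi0 phi1 : R -> R) : \bar R :=
  match dist2 phi0 phi1 with
  | r%:E => (Num.sqrt r)%:E
  | +oo%E => +oo%E
  | -oo%E => -oo%E
  end.

End Defs.

(* Main.v *)
Require Import Defs.
From HB Require Import structures.
From mathcomp Require Import all_boot all_order all_algebra.
From mathcomp Require Import all_classical all_reals all_analysis.
From mathcomp Require Import ring lra measurable_realfun.
Import Order.TTheory GRing.Theory Num.Theory.
Import numFieldNormedType.Exports.
Local Open Scope classical_set_scope.
Local Open Scope ring_scope.

Lemma le_int_nm d (T : measurableType d) (R : realType)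
  (mu : {measure set T -> \bar R}) (D : set T) (f g : T -> \bar R) :
  (forall x, D x -> (0 <= f x)%E) -> (forall x, D x -> (f x <= g x)%E) ->
  (\int[mu]_(x in D) f x <= \int[mu]_(x in D) g x)%E.
Proof.
move=> f0 fg.
have g0 : forall x, D x -> (0 <= g x)%E.
  by move=> x Dx; exact: le_trans (f0 x Dx) (fg x Dx).
rewrite (ge0_integralE mu f0) (ge0_integralE mu g0) /=.
apply: ereal_sup_le => _ [h hf <-]; exists h => //= x; apply: le_trans (hf x) _.
rewrite !patchE; case: ifP => // /set_mem; exact: fg.
Qed.

Section S.
Variable R : realType.
Local Notation mu := (@lebesgue_measure R).

Definition gE (v w : R -> R -> R) (t : R) : \bar R :=
  (\int[mu]_(x in `[0%R, 1%R]) ((v t x) ^+ 2 + (w t x) ^+ 2 / 4)%:E)%E.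

Lemma mu01 : mu `[0%R, 1%R] = 1%E.
Proof. by rewrite lebesgue_measure_itv /= lte_fin ltr01 -EFinD subr0. Qed.

Lemma gmeas (v w : R -> R -> R) : L2H10_with_deriv v w -> measurable_fun (`[0%R, 1%R] : set R) (fun t => gE v w t).
Proof.
move=> [mv [mw _]].
pose f := fun p : R * R => ((v p.1 p.2) ^+ 2 + (w p.1 p.2) ^+ 2 / 4)%:E.
have mD : measurable ((`[0%R, 1%R] : set R) `*` (`[0%R, 1%R] : set R)).
  by apply: measurableX.
have mf : measurable_fun ((`[0%R, 1%R] : set R) `*` (`[0%R, 1%R] : set R)) f.
  apply/measurable_EFinP; apply: measurable_funD.
    exact: measurable_funX.
  apply: measurable_funM; last exact: measurable_cst.
  exact: measurable_funX.
have := measurable_fun_fubini_tonelli_F (m2 := mu) (f \_ ((`[0%R, 1%R] : set R) `*` (`[0%R, 1%R] : set R))).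
move=> /(_ ((measurable_restrictT _ mD).1 mf)) H.
have f0 : forall x, (0 <= (f \_ ((`[0%R, 1%R] : set R) `*` (`[0%R, 1%R] : set R))) x)%E.
  move=> x; rewrite patchE; case: ifP => // _.
  by rewrite lee_fin addr_ge0 // ?sqr_ge0 // divr_ge0 // sqr_ge0.
apply: (eq_measurable_fun (fubini_F mu (f \_ ((`[0%R, 1%R] : set R) `*` (`[0%R, 1%R] : set R))))).
  move=> t /set_mem t01; rewrite /fubini_F /gE [RHS]integral_mkcond; apply: eq_integral => y _.
  by rewrite !patchE in_setX (mem_set t01).
exact: measurable_funS measurableT _ (H f0).
Qed.

Lemma am_gm (a lam : R) : 0 < lam -> `|a| <= 2 / lam * (a ^+ 2 / 4) + lam / 2.
Proof.
move=> l0; have eb : a ^+ 2 = `|a| ^+ 2 by rewrite real_normK ?num_real.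
rewrite eb; move: (`|a|) => b.
have k0 : 0 < lam^-1 by rewrite invr_gt0.
have e : lam * lam^-1 = 1 by rewrite mulfV ?gt_eqF.
have h := mulr_ge0 (sqr_ge0 (b - lam)) (ltW k0).
have e1 : b * lam * lam^-1 = b by rewrite -mulrA e mulr1.
have e2 : lam * lam * lam^-1 = lam by rewrite -mulrA e mulr1.
have E : 2 / lam * (b ^+ 2 / 4) + lam / 2 - b = (b - lam) ^+ 2 * lam^-1 / 2.
  by field; rewrite gt_eqF.
rewrite -subr_ge0 E; apply: divr_ge0 => //.
Qed.

Lemma bound_v (v w : R -> R -> R) (lam : R) : L2H10_with_deriv v w -> 0 < lam ->
  forall t y, t \in `[0%R, 1%R] -> y \in `[0%R, 1%R] ->
  ((`|v t y|)%:E <= (2 / lam)%:E * gE v w t + (lam / 2)%:E)%E.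
Proof.
move=> [_ [_ [H _]]] l0 t y t01 y01.
have [wi [_ [vw _]]] := H t t01.
have mw : measurable_fun (`[0%R, 1%R] : set R) (fun z => (w t z)%:E) := measurable_int _ wi.
have mwr : measurable_fun (`[0%R, 1%R] : set R) (w t) by apply/measurable_EFinP.
have sub : (`[0%R, y] : set R) `<=` `[0%R, 1%R].
  move=> z /=; rewrite !in_itv /= => /andP[z0 zy]; move: y01; rewrite in_itv /= => /andP[_ y1].
  by rewrite z0 (le_trans zy y1).
pose h := fun z => ((2 / lam)%:E * ((w t z) ^+ 2 / 4)%:E + (lam / 2)%:E)%E.
have s1 : ((`|v t y|)%:E <= \int[mu]_(z in `[0%R, 1%R]) h z)%E.
  rewrite -abse_EFin (vw y y01).
  apply: le_trans (le_abse_integral mu (measurable_itv _) (measurable_funS (measurable_itv _) sub mw)) _.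
  rewrite -(setIidr sub) integral_mkcondr.
  apply: le_int_nm => z z01; first by rewrite patchE; case: ifP.
  rewrite patchE; case: ifP => _.
    by rewrite /h abse_EFin -EFinM -EFinD lee_fin; exact: am_gm.
  rewrite /h -EFinM -EFinD lee_fin; apply: addr_ge0; last by rewrite divr_ge0 // ltW.
  by rewrite mulr_ge0 // ?divr_ge0 // ?sqr_ge0 // ltW.
have s2 : (\int[mu]_(z in `[0%R, 1%R]) h z = (2 / lam)%:E * \int[mu]_(z in `[0%R, 1%R]) ((w t z) ^+ 2 / 4)%:E + (lam / 2)%:E)%E.
  have mh1 : measurable_fun (`[0%R, 1%R] : set R) (fun z => ((w t z) ^+ 2 / 4)%:E).
    apply/measurable_EFinP; apply: measurable_funM.
      exact: measurable_funX mwr.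
    exact: measurable_cst.
  have h10 : forall z, z \in `[0%R, 1%R] -> (0 <= ((w t z) ^+ 2 / 4)%:E)%E.
    by move=> z _; rewrite lee_fin divr_ge0 // sqr_ge0.
  have l20 : 0 <= 2 / lam by rewrite divr_ge0 // ltW.
  rewrite ge0_integralD; first last.
  - exact: measurable_cst.
  - by move=> z _; rewrite lee_fin divr_ge0 // ltW.
  - exact: measurable_funeM.
  - by move=> z zD; rewrite mule_ge0 // ?lee_fin //; exact: h10.
  - exact: measurable_itv.
  rewrite ge0_integralZl_EFin //.
  rewrite integral_cst //; congr (_ + _); rewrite -[RHS]mule1; apply: (congr1 (fun u => ((lam / 2)%:E * u)%E)); exact: mu01.
have s3 : (\int[mu]_(z in `[0%R, 1%R]) ((w t z) ^+ 2 / 4)%:E <= gE v w t)%E.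
  apply: le_int_nm => z _; first by rewrite lee_fin divr_ge0 // sqr_ge0.
  by rewrite lee_fin -subr_ge0 addrK sqr_ge0.
apply: le_trans s1 _; rewrite s2; apply: leeD => //; apply: lee_wpmul2l => //.
by rewrite lee_fin divr_ge0 // ltW.
Qed.

Lemma gE0 (v w : R -> R -> R) t : (0 <= gE v w t)%E.
Proof.
apply: integral_ge0 => z _; rewrite lee_fin addr_ge0 // ?sqr_ge0 //.
by rewrite divr_ge0 // sqr_ge0.
Qed.

Lemma key (v w phi : R -> R -> R) (phi0 phi1 : R -> R) (lam x : R) :
  L2H10_with_deriv v w -> lagrangian_flow v phi ->
  (forall x, x \in `[0%R, 1%R] -> phi 0 x = phi0 x) ->
  (forall x, x \in `[0%R, 1%R] -> phi 1 x = phi1 x) ->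
  0 < lam -> x \in `[0%R, 1%R] ->
  ((`|phi0 x - phi1 x|)%:E <= (2 / lam)%:E * energy v w + (lam / 2)%:E)%E.
Proof.
move=> Hvw [p01 [_ Hfl]] h0 h1 l0 x01.
have [_ [vi vint]] := Hfl x x01.
have e : ((phi1 x - phi0 x)%:E = \int[mu]_(r in `[0%R, 1%R]) (v r (phi r x))%:E)%E.
  by rewrite -(h0 x x01) -(h1 x x01); apply: vint => //; rewrite ltr01.
rewrite distrC -abse_EFin e.
apply: le_trans (le_abse_integral mu (measurable_itv _) (measurable_int _ vi)) _.
apply: le_trans (@le_int_nm _ _ _ mu _ _ (fun r => ((2 / lam)%:E * gE v w r + (lam / 2)%:E)%E) _ _) _.
- by move=> r _; exact: abse_ge0.
- move=> r r01; rewrite abse_EFin; apply: bound_v => //; exact: p01.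
have l20 : 0 <= 2 / lam by rewrite divr_ge0 // ltW.
rewrite ge0_integralD; first last.
- exact: measurable_cst.
- by move=> z _; rewrite lee_fin divr_ge0 // ltW.
- by apply: measurable_funeM; exact: gmeas.
- by move=> z zD; rewrite mule_ge0 // ?lee_fin // gE0.
- exact: measurable_itv.
rewrite ge0_integralZl_EFin //; first last.
- exact: gmeas.
- by move=> z _; exact: gE0.
rewrite integral_cst //; apply: leeD; first exact: lexx.
rewrite -[X in (_ <= X)%E]mule1; apply: lee_wpmul2l; first by rewrite lee_fin divr_ge0 // ltW.
by rewrite le_eqVlt; apply/orP; left; apply/eqP; exact: mu01.
Qed.
End S.

Lemma lbdist (R : realType) (phi0 phi1 : R -> R) (lam x : R) :
  0 < lam -> x \in `[0%R, 1%R] ->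
  ((((`|phi0 x - phi1 x| - lam / 2) * (lam / 2))%:E <= dist2 phi0 phi1)%E).
Proof.
move=> l0 x01; rewrite /dist2; apply: le_ereal_inf_tmp => _ [[v w] /= [Hvw [phi [Hfl [h0 h1]]]] <-].
have := @key R _ _ _ _ _ _ _ Hvw Hfl h0 h1 l0 x01.

have en0 : (0 <= energy v w)%E.
  by apply: integral_ge0 => t _; exact: gE0.
case: (energy v w) en0 => [r| |] //= r0.
- rewrite -EFinM -EFinD !lee_fin => H.
  have H' : `|phi0 x - phi1 x| - lam / 2 <= 2 / lam * r by rewrite lerBlDr.
  apply: le_trans (ler_wpM2r _ H') _; first by rewrite divr_ge0 // ltW.
  have -> : 2 / lam * r * (lam / 2) = r by field; rewrite gt_eqF.
  exact: lexx.
- by rewrite leey.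
Qed.

Theorem mainTheorem2 (R : realType) (phi0 phi1 : R -> R) :
  Monp phi0 -> Monp phi1 ->
  (ereal_sup [set (`|phi0 x - phi1 x|)%:E | x in `[0%R, 1%R]]
     <= 2%:E * dist phi0 phi1)%E.
Proof.
move=> _ _.
apply: ge_ereal_sup => _ [x x01 <-].
have Hlb := fun lam l0 => @lbdist R phi0 phi1 lam x l0 x01.
rewrite /dist; move: Hlb; case: (dist2 phi0 phi1) => [r| |] Hlb.
- rewrite -EFinM lee_fin.
  have H lam : 0 < lam -> (`|phi0 x - phi1 x| - lam / 2) * (lam / 2) <= r.
    by move=> l0; rewrite -lee_fin; exact: Hlb.
  move: H; set a := `|phi0 x - phi1 x| => H.
  have a0 : 0 <= a by rewrite normr_ge0.
  case: (ltP 0 r) => r0.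
    have s0 : 0 < Num.sqrt r by rewrite sqrtr_gt0.
    have := H (2 * Num.sqrt r) (mulr_gt0 (ltr0n _ 2) s0).
    have -> : 2 * Num.sqrt r / 2 = Num.sqrt r by field.
    have e : r = Num.sqrt r * Num.sqrt r by rewrite -expr2 sqr_sqrtr // ltW.
    rewrite [X in _ <= X -> _]e; nra.
  rewrite ler0_sqrtr // mulr0; case: (ltP 0 a) => a0' //.
  have := H a a0'; nra.
- by rewrite mulry gtr0_sg // mul1e leey.
- by have := Hlb 1 ltr01.
Qed.
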